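(* Let $(\Omega,\{\Omega_m\}_{m\ge1},\rho,\mu)$ be a locally homogeneous space and fix $n\ge1$. Let $\Delta_{n+1}=\{Q^k_\alpha\}$ be the family of dyadic cubes subordinated to $\Omega_{n+1}$, with constants $a_0,c_0,c_1,c_2,\delta$, as described in the context. Then for every positive integer $k$ large enough, the set $\Omega_n$ is covered, up to a set of $\mu$-measure zero, by a finite union of dyadic cubes $Q^k_\alpha\in\Delta_{n+1}$ of generation $k$ with the following properties: (i) $Q^k_\alpha\subset B(z^k_\alpha,c_1\delta^k)\subset\Omega_{n+1}$; (ii) there is a set $F^k_\alpha$ which is a finite union of dyadic cubes $Q^k_{\beta}\in\Delta_{n+1}$ of generation $k$, such that $B(z^k_\alpha,c_1\delta^k)\subset F^k_\alpha$ up to a set of measure zero and $F^k_\alpha\subset B(z^k_\alpha,c'\delta^k)\subset\Omega_{n+1}$ (for a constant $c'$ independent of $k$); moreover $F^k_\alpha$ is a space of homogeneous type, i.e. there is a constant $c$ with $\mu(B(x,2r)\cap F^k_\alpha)\le c\,\mu(B(x,r)\cap F^k_\alpha)$ for a.e. $x\in F^k_\alpha$ and all $r>0$.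
   Context: A locally homogeneous space $(\Omega,\{\Omega_m\},\rho,\mu)$ consists of: a set $\Omega$ and $\rho:\Omega\times\Omega\to[0,\infty)$ with $\rho(x,y)=0\iff x=y$ and $\rho(x,y)=\rho(y,x)$; balls $B(x,r)=\{y\in\Omega:\rho(x,y)<r\}$; the topology in which $A$ is open iff every $x\in A$ has some $B(x,r)\subset A$; a set is bounded if contained in some ball; it is assumed that the balls are open and the closure of $B(x,r)$ is contained in $\{y:\rho(x,y)\le r\}$ (equivalently, $\rho(\cdot,y)$ is continuous for each $y$); $\mu$ is a positive regular Borel measure on $\Omega$; $\{\Omega_m\}_{m\ge1}$ is an increasing sequence of bounded measurable sets with $\bigcup_m\Omega_m=\Omega$ such that for every $m$: the closure of $\Omega_m$ is compact; there is $\varepsilon_m>0$ with $\{x\in\Omega:\rho(x,y)<2\varepsilon_m\text{ for some }y\in\Omega_m\}\subset\Omega_{m+1}$; there is $B_m\ge1$ with $\rho(x,y)\le B_m(\rho(x,z)+\rho(z,y))$ for all $x,y,z\in\Omega_m$; there is $C_m>1$ with $0<\mu(B(x,2r))\le C_m\mu(B(x,r))<\infty$ for all $x\in\Omega_m$, $0<r\le\varepsilon_m$. Dyadic cubes (construction of Bramanti–Zhu): for each $N$ there is a collection $\Delta_N=\{Q^k_\alpha:k=1,2,\dots,\alpha\in I_k\}$ of open sets (''dyadic cubes subordinated to $\Omega_N$'', $Q^k_\alpha$ of generation $k$), constants $a_0,c_0,c_1,c_2>0$, $\delta\in(0,1)$ with $c_1\delta<2\varepsilon_{N+1}$, and a set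 $E\subset\Omega_N$ with $\mu(E)=0$, such that for every $k\ge1$: (a) each $Q^k_\alpha$ contains a ball $B(z^k_\alpha,a_0\delta^k)$; (b) $\bigcup_\alpha Q^k_\alpha\subset\Omega_{N+1}$; (c) for $1\le l\le k$ there is $Q^l_\beta\supseteq Q^k_\alpha$; (d) $\mathrm{diam}(Q^k_\alpha)<c_1\delta^k$ and $\overline{Q^k_\alpha}\subset B(z^k_\alpha,c_1\delta^k)\subset\Omega_{N+2}$; (e) if $l\ge k$ then either $Q^l_\beta\subset Q^k_\alpha$ or $Q^l_\beta\cap Q^k_\alpha=\emptyset$; (f) $\Omega_N\setminus\bigcup_\alpha Q^k_\alpha\subset E$; (g) for $x\in Q^k_\alpha\setminus E$ and $j\ge1$ there is $Q^j_\beta\ni x$; (h) $\mu(B(x,2r)\cap Q^k_\alpha)\le c_2\,\mu(B(x,r)\cap Q^k_\alpha)$ for $x\in Q^k_\alpha\setminus E$, $r>0$; more precisely $\mu(B(x,r)\cap Q^k_\alpha)\ge c_0\mu(B(x,r))$ for $r\le\delta^k$ and $\ge c_0\mu(Q^k_\alpha)$ for $r>\delta^k$. *)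

(* Defs.v *)
From HB Require Import structures.
From mathcomp Require Import all_boot all_order all_algebra.
From mathcomp Require Import all_classical all_reals all_analysis.
Set Implicit Arguments. Unset Strict Implicit. Unset Printing Implicit Defensive.
Import Order.TTheory GRing.Theory Num.Theory.
Local Open Scope classical_set_scope.
Local Open Scope ring_scope.

Section QuasiMetric.
Context {R : realType} {T : Type} (rho : T -> T -> R).

Definition rball (x : T) (r : R) : set T := [set y | rho x y < r].

Definition rho_open (A : set T) : Prop :=
  forall x, A x -> exists r : R, 0 < r /\ rball x r `<=` A.

Definition rho_closure (A : set T) : set T :=
  [set x | forall U, rho_open U -> U x -> U `&` A !=set0].

Definition rho_compact (K : set T) : Prop :=
  forall (I : Type) (U : I -> set T), (forall i, rho_open (U i)) ->
    K `<=` \bigcup_i U i ->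
    exists F : set I, finite_set F /\ K `<=` \bigcup_(i in F) U i.

Definition rho_bounded (A : set T) : Prop :=
  exists x r, A `<=` rball x r.

Definition rho_diam (A : set T) : \bar R :=
  ereal_sup [set e | exists x y, A x /\ A y /\ e = (rho x y)%:E].

End QuasiMetric.

(** A locally homogeneous space (Omega, {Omega_m}_{m>=1}, rho, mu); the
    numbers eps_m of the definition are named explicitly as [eps m]. *)
Record locally_homogeneous (d : measure_display) (T : measurableType d)
    (R : realType) (rho : T -> T -> R) (mu : {measure set T -> \bar R})
    (Om : nat -> set T) (eps : nat -> R) : Prop := {
  lh_rho_ge0 : forall x y, 0 <= rho x y;
  lh_rho_eq0 : forall x y, rho x y = 0 <-> x = y;
  lh_rho_sym : forall x y, rho x y = rho y x;
  lh_ball_open : forall x r, rho_open rho (rball rho x r);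
  lh_closure_ball : forall x r,
      rho_closure rho (rball rho x r) `<=` [set y | rho x y <= r];
  lh_borel : @measurable d T = <<s rho_open rho >>;
  lh_outer_regular : forall A, measurable A ->
      mu A = ereal_inf [set mu U | U in [set U | rho_open rho U /\ A `<=` U]];
  lh_inner_regular : forall A, measurable A ->
      mu A = ereal_sup [set mu K | K in
                         [set K | measurable K /\ rho_compact rho K /\ K `<=` A]];
  lh_Om_meas : forall m, (0 < m)%N -> measurable (Om m);
  lh_Om_bounded : forall m, (0 < m)%N -> rho_bounded rho (Om m);
  lh_Om_incr : forall m, (0 < m)%N -> Om m `<=` Om m.+1;
  lh_Om_cover : \bigcup_(m in [set m | (0 < m)%N]) Om m = setT;
  lh_Om_compact : forall m, (0 < m)%N -> rho_compact rho (rho_closure rho (Om m));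
  lh_eps_pos : forall m, (0 < m)%N -> 0 < eps m;
  lh_eps_nbhd : forall m, (0 < m)%N ->
      [set x | exists y, Om m y /\ rho x y < 2 * eps m] `<=` Om m.+1;
  lh_quasi_triangle : forall m, (0 < m)%N -> exists B : R, 1 <= B /\
      forall x y z, Om m x -> Om m y -> Om m z ->
        rho x y <= B * (rho x z + rho z y);
  lh_doubling : forall m, (0 < m)%N -> exists C : R, 1 < C /\
      forall x r, Om m x -> 0 < r -> r <= eps m ->
        [/\ (0 < mu (rball rho x (2 * r)))%E,
            (mu (rball rho x (2 * r)) <= C%:E * mu (rball rho x r))%E &
            (mu (rball rho x r) < +oo)%E ]
}.

(** The dyadic cubes Delta_N = {Q k a : k >= 1, a : I k} subordinated to
    Omega_N (Bramanti--Zhu), with centers [z k a], constants a0 c0 c1 c2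
    delta and exceptional null set E, satisfying properties (a)--(h). *)
Record dyadic_cubes (d : measure_display) (T : measurableType d)
    (R : realType) (rho : T -> T -> R) (mu : {measure set T -> \bar R})
    (Om : nat -> set T) (eps : nat -> R) (N : nat)
    (I : nat -> Type) (Q : forall k, I k -> set T) (z : forall k, I k -> T)
    (a0 c0 c1 c2 delta : R) (E : set T) : Prop := {
  dc_a0 : 0 < a0; dc_c0 : 0 < c0; dc_c1 : 0 < c1; dc_c2 : 0 < c2;
  dc_delta : 0 < delta < 1;
  dc_c1delta : c1 * delta < 2 * eps N.+1;
  dc_E_sub : E `<=` Om N;
  dc_E_meas : measurable E;
  dc_E_null : mu E = 0%E;
  dc_open : forall k (a : I k), (0 < k)%N -> rho_open rho (Q k a);
  dc_a : forall k (a : I k), (0 < k)%N ->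
      rball rho (z k a) (a0 * delta ^+ k) `<=` Q k a;
  dc_b : forall k (a : I k), (0 < k)%N -> Q k a `<=` Om N.+1;
  dc_c : forall k l (a : I k), (0 < l)%N -> (l <= k)%N ->
      exists b : I l, Q k a `<=` Q l b;
  dc_d : forall k (a : I k), (0 < k)%N ->
      [/\ (rho_diam rho (Q k a) < (c1 * delta ^+ k)%:E)%E,
          rho_closure rho (Q k a) `<=` rball rho (z k a) (c1 * delta ^+ k) &
          rball rho (z k a) (c1 * delta ^+ k) `<=` Om N.+2];
  dc_e : forall k l (a : I k) (b : I l), (0 < k)%N -> (k <= l)%N ->
      Q l b `<=` Q k a \/ Q l b `&` Q k a = set0;
  dc_f : forall k, (0 < k)%N -> Om N `\` \bigcup_(a in [set: I k]) Q k a `<=` E;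
  dc_g : forall k (a : I k) x j, (0 < k)%N -> Q k a x -> ~ E x -> (0 < j)%N ->
      exists b : I j, Q j b x;
  dc_h : forall k (a : I k) x r, (0 < k)%N -> Q k a x -> ~ E x -> 0 < r ->
      (mu (rball rho x (2 * r) `&` Q k a)
         <= c2%:E * mu (rball rho x r `&` Q k a))%E;
  dc_h_small : forall k (a : I k) x r, (0 < k)%N -> Q k a x -> ~ E x -> 0 < r ->
      r <= delta ^+ k ->
      (c0%:E * mu (rball rho x r) <= mu (rball rho x r `&` Q k a))%E;
  dc_h_large : forall k (a : I k) x r, (0 < k)%N -> Q k a x -> ~ E x ->
      delta ^+ k < r ->
      (c0%:E * mu (Q k a) <= mu (rball rho x r `&` Q k a))%E
}.

(* Main.v *)
Require Import Defs.
From HB Require Import structures.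
From mathcomp Require Import all_boot all_order all_algebra.
From mathcomp Require Import all_classical all_reals all_analysis.
From mathcomp Require Import finmap.
From mathcomp Require Import ring lra zify.
Import Order.TTheory GRing.Theory Num.Theory.
Local Open Scope classical_set_scope.
Local Open Scope ring_scope.

Lemma exK (R : realType) (dl t : R) : 0 < dl < 1 -> 0 < t ->
  exists K : nat, dl ^+ K < t.
Proof.
move=> /andP[d0 d1] t0.
have h : `|dl| < 1 by rewrite ger0_norm // ltW.
have /cvgrPdist_lt /(_ t t0) := cvg_expr h.
move=> [N _ HN]; exists N.
have := HN N (leqnn N); rewrite /= sub0r normrN ger0_norm //.
by rewrite exprn_ge0 // ltW.
Qed.

Lemma list_min (R : realType) (s : seq (\bar R)) :
  (forall y, y \in s -> (0 < y)%E) ->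
  exists m : R, 0 < m /\ forall y, y \in s -> (m%:E <= y)%E.
Proof.
elim: s => [|y s IH] H; first by exists 1; split => // y.
have [m [m0 Hm]] : exists m : R, 0 < m /\ forall y, y \in s -> (m%:E <= y)%E.
  by apply: IH => x xs; apply: H; rewrite inE xs orbT.
have y0 : (0 < y)%E by apply: H; rewrite inE eqxx.
case: (ltP y +oo%E) => yoo.
- have yf : y \is a fin_num by rewrite ge0_fin_numE // ltW.
  exists (Num.min m (fine y)); split.
    by rewrite lt_min m0 /= -lte_fin fineK.
  move=> x; rewrite inE => /orP[/eqP ->|xs].
    by rewrite -(fineK yf) lee_fin ge_min lexx orbT.
  apply: le_trans (Hm x xs); by rewrite lee_fin ge_min lexx.
- exists m; split => // x; rewrite inE => /orP[/eqP ->|xs]; last exact: Hm.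
  by apply: le_trans yoo; rewrite leey.
Qed.

Lemma finite_min (R : realType) (J : Type) (A : set J) (g : J -> \bar R) :
  finite_set A -> (forall b, A b -> (0 < g b)%E) ->
  exists m : R, 0 < m /\ forall b, A b -> (m%:E <= g b)%E.
Proof.
move=> fA Hg.
have fX : finite_set (g @` A) by apply: finite_image.
have [|m [m0 Hm]] := @list_min R (finmap.enum_fset (fset_set (g @` A))).
  move=> y yi; have : y \in fset_set (g @` A) by [].
  by rewrite in_fset_set // in_setE => -[b Ab <-]; exact: Hg.
exists m; split => // b Ab; apply: Hm.
have -> : (g b \in finmap.enum_fset (fset_set (g @` A))) = (g b \in fset_set (g @` A)) by [].
by rewrite in_fset_set // in_setE; exists b.
Qed.

Lemma finite_choice (X J : Type) (F : set X) (P : X -> J -> Prop) :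
  finite_set F -> exists S0 : set J, finite_set S0 /\
    forall x, F x -> (exists a, P x a) -> exists a, S0 a /\ P x a.
Proof.
move=> fF.
pose G x : set J := match pselect (exists a, P x a) with
  | left h => [set sval (cid h)] | right _ => set0 end.
exists (\bigcup_(x in F) G x); split.
  apply: bigcup_finite => // x _; rewrite /G; case: pselect => h; [exact: finite_set1|exact: finite_set0].
move=> x Fx ex; exists (sval (cid ex)); split; last by case: cid.
exists x => //; rewrite /G; case: pselect => // h.
by rewrite /= (Prop_irrelevance ex h).
Qed.

Theorem mainTheorem4 (d : measure_display) (T : measurableType d)
    (R : realType) (rho : T -> T -> R) (mu : {measure set T -> \bar R})
    (Om : nat -> set T) (eps : nat -> R) (n : nat)
    (I : nat -> Type) (Q : forall k, I k -> set T) (z : forall k, I k -> T)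
    (a0 c0 c1 c2 delta : R) (E : set T) :
  locally_homogeneous rho mu Om eps ->
  (0 < n)%N ->
  dyadic_cubes rho mu Om eps n.+1 Q z a0 c0 c1 c2 delta E ->
  exists c' : R, exists K : nat, forall k : nat, (K <= k)%N -> (0 < k)%N ->
    exists S : set (I k),
      [/\ finite_set S,
          mu.-negligible (Om n `\` \bigcup_(a in S) Q k a) &
          forall a, S a ->
            [/\ Q k a `<=` rball rho (z k a) (c1 * delta ^+ k),
                rball rho (z k a) (c1 * delta ^+ k) `<=` Om n.+1 &
                exists S' : set (I k), exists F : set T,
                  [/\ finite_set S', F = \bigcup_(b in S') Q k b,
                      mu.-negligible (rball rho (z k a) (c1 * delta ^+ k) `\` F),
                      (F `<=` rball rho (z k a) (c' * delta ^+ k) /\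
                       rball rho (z k a) (c' * delta ^+ k) `<=` Om n.+1) &
                      exists c : R,
                        {ae mu, forall x, F x -> forall r : R, 0 < r ->
                          (mu (rball rho x (2 * r) `&` F)
                             <= c%:E * mu (rball rho x r `&` F))%E}]]].
Proof.
move=> LH n0 DC.
case: LH => rho_ge0 rho_eq0 rho_sym ball_open clos_ball borel _ _ Om_meas _ Om_incr
  _ Om_comp eps_pos eps_nbhd qtri dbl.
case: DC => a00 c00 c10 c20 dl _ _ E_meas E_null Qopen Qa Qb Qc Qd Qe
  Qf Qg Qh Qhs Qhl.
have /andP[dl0 dl1] := dl.
have open_meas : forall A, rho_open rho A -> measurable A.
  by move=> A oA; rewrite borel; exact: sub_sigma_algebra.
have ball_meas : forall x r, measurable (rball rho x r).
  by move=> x r; apply: open_meas; apply: ball_open.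
have sub_clos : forall A, A `<=` rho_closure rho A.
  by move=> A x Ax U _ Ux; exists x.
have rho0 : forall x, rho x x = 0 by move=> x; apply/rho_eq0.
have Om_mono : forall m p, (0 < m)%N -> (m <= p)%N -> Om m `<=` Om p.
  move=> m p m0; elim: p => [|p IH]; first by rewrite leqn0 => /eqP m0'; move: m0; rewrite m0'.
  rewrite leq_eqVlt => /orP[/eqP -> //|]; rewrite ltnS => mp.
  by move=> x /(IH mp); apply: Om_incr; exact: leq_trans m0 mp.
have nbhd : forall m x y, (0 < m)%N -> Om m y -> rho x y < eps m -> Om m.+1 x.
  move=> m x y m0 Oy h; apply: (eps_nbhd m m0); exists y; split => //.
  by have := eps_pos m m0; lra.
have negE : forall A, A `<=` E -> mu.-negligible A by move=> A AE; exists E.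
have [B [B1 HB]] := qtri n.+4.+1 isT.
have [C [C1 HC]] := dbl n.+3 isT.
set cp := B * (c1 + B * (c1 + c1)).
have cp0 : 0 < cp by rewrite /cp; nra.
have c1cp : c1 <= cp by rewrite /cp; nra.
have e0 := eps_pos n n0; have e3 := eps_pos n.+3 isT.
set t := Num.min (Num.min (eps n.+3) (eps n.+3 / cp))
                 (Num.min (eps n / (B * (c1 + cp))) (eps n.+3 / a0)).
have t0 : 0 < t.
  rewrite /t !lt_min e3 !divr_gt0 //; nra.
have [K HK] := @exK R delta t dl t0.
exists cp, K => k Kk k0.
have dk0 : 0 < delta ^+ k by rewrite exprn_gt0.
have dkt : delta ^+ k < t.
  by apply: le_lt_trans HK; apply: ler_wiXn2l => //; exact: ltW.
move: dkt; rewrite /t !lt_min => /andP[/andP[d1 d2] /andP[d3 d4]].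
move: d2 d3 d4; rewrite !ltr_pdivlMr //; last nra.
rewrite ![delta ^+ k * _]mulrC => d2 d3 d4.
have ak0 : 0 < a0 * delta ^+ k by rewrite mulr_gt0.
have ck0 : 0 < c1 * delta ^+ k by rewrite mulr_gt0.
have [Fx [fFx cov]] := Om_comp n.+3 isT T (fun x => rball rho x (a0 * delta ^+ k))
  (fun x => ball_open x _) (fun x _ => ex_intro2 _ _ x Logic.I
     (eq_ind_r (fun u => u < a0 * delta ^+ k) ak0 (rho0 x))).
have [S0 [fS0 HS0]] := @finite_choice T (I k) Fx (fun x a => rho x (z k a) < a0 * delta ^+ k) fFx.
have zOm : forall a, Om n.+3 (z k a).
  move=> a; have [_ _ h] := Qd k a k0; apply: h; by rewrite /rball /= rho0.
have inQball : forall b y, Q k b y -> rho (z k b) y < c1 * delta ^+ k.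
  by move=> b y Qy; have [_ h _] := Qd k b k0; apply: h; apply: sub_clos.
have Qeq : forall a b x, Q k a x -> Q k b x -> Q k a = Q k b.
  move=> a b x xa xb; apply/seteqP; split.
    have [//|h] := Qe k k b a k0 (leqnn k).
    by have : (Q k a `&` Q k b) x by []; rewrite h.
  have [//|h] := Qe k k a b k0 (leqnn k).
  by have : (Q k b `&` Q k a) x by []; rewrite h.
have rep : forall a, exists a', S0 a' /\ Q k a' = Q k a.
  move=> a; have /cov [x Fxx hx] : rho_closure rho (Om n.+3) (z k a) by apply: sub_clos.
  have [a' [S0a' ha']] := HS0 x Fxx (ex_intro _ a hx).
  exists a'; split => //; apply: (Qeq _ _ x); apply: Qa => //; by rewrite /rball /= rho_sym.
have O5 : forall m x, (0 < m)%N -> (m <= n.+4.+1)%N -> Om m x -> Om n.+4.+1 x.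
  by move=> m x m0 mle; apply: Om_mono.
have l0 : (n <= n.+4.+1)%N by rewrite leqW // leqW // leqW // leqW // leqW.
have l2 : (n.+2 <= n.+4.+1)%N by rewrite leqW // leqW // leqW.
have l3 : (n.+3 <= n.+4.+1)%N by rewrite leqW // leqW.
have inQ : forall b y, Q k b y -> Om n.+2 y by move=> b y; apply: Qb.
have cover : forall y, Om n.+1 y -> ~ E y -> exists a, S0 a /\ Q k a y.
  move=> y Oy nE; case: (pselect (exists a, Q k a y)) => [[a Qay]|h].
    by have [a' [S0a' e]] := rep a; exists a'; rewrite e.
  by exfalso; apply: nE; apply: (Qf k k0); split => // -[a _ ?]; apply: h; exists a.
exists [set a | S0 a /\ exists w, Q k a w /\ Om n w]; split.
- by apply: sub_finite_set fS0 => a [].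
- apply: negE => y [Oy notin]; apply: contrapT => nE; apply: notin.
  have [a [S0a Qay]] := cover y (Om_incr n n0 y Oy) nE.
  by exists a => //; split => //; exists y.
move=> a [S0a [w [Qaw Onw]]].
have zO := zOm a.
have Gfact : rball rho (z k a) (cp * delta ^+ k) `<=` Om n.+1.
  move=> y hy; rewrite /rball /= in hy.
  have yO4 : Om n.+4 y.
    by apply: (nbhd n.+3 y (z k a)) => //; rewrite rho_sym; exact: lt_trans hy d2.
  have hw := inQball a w Qaw.
  apply: (nbhd n y w n0 Onw).
  have := HB y w (z k a) (O5 n.+4 y isT (leqnSn _) yO4) (O5 n w n0 l0 Onw)
    (O5 n.+3 _ isT l3 zO).
  have hy' : rho y (z k a) < cp * delta ^+ k by rewrite rho_sym.
  move=> h; apply: le_lt_trans h _; apply: lt_trans _ d3; nra.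
have ballsub : rball rho (z k a) (c1 * delta ^+ k) `<=` rball rho (z k a) (cp * delta ^+ k).
  move=> y; rewrite /rball /= => h; apply: lt_le_trans h _.
  by rewrite ler_wpM2r // ltW.
split.
- by move=> y Qy; apply: inQball.
- by move=> y /ballsub /Gfact.
set S' := [set b | S0 b /\ exists w, Q k b w /\ rball rho (z k a) (c1 * delta ^+ k) w].
have fS' : finite_set S' by apply: sub_finite_set fS0 => b [].
set F := \bigcup_(b in S') Q k b.
have Fsub : F `<=` rball rho (z k a) (cp * delta ^+ k).
  move=> y [b [S0b [v [Qbv vb]]] Qby]; rewrite /rball /= in vb *.
  have hv := inQball b v Qbv; have hy := inQball b y Qby.
  have vO : Om n.+3 v by have [_ _ h] := Qd k a k0; apply: h.
  have h1 := HB v y (z k b) (O5 n.+3 _ isT l3 vO) (O5 n.+2 _ isT l2 (inQ _ _ Qby))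
    (O5 n.+3 _ isT l3 (zOm b)).
  have h2 := HB (z k a) y v (O5 n.+3 _ isT l3 zO) (O5 n.+2 _ isT l2 (inQ _ _ Qby))
    (O5 n.+3 _ isT l3 vO).
  have hv' : rho v (z k b) < c1 * delta ^+ k by rewrite rho_sym.
  apply: le_lt_trans h2 _.
  have h3 : rho v y < B * (c1 * delta ^+ k + c1 * delta ^+ k).
    by apply: le_lt_trans h1 _; nra.
  rewrite /cp; nra.
have Fopen : rho_open rho F.
  move=> y [b Sb Qby]; have [r [r0 hr]] := Qopen k b k0 y Qby.
  by exists r; split => // u /hr Qbu; exists b.
have Fmeas : measurable F by apply: open_meas.
exists S', F; split => //.
- apply: negE => y [yb notF]; apply: contrapT => nE; apply: notF.
  have [b [S0b Qby]] := cover y (Gfact y (ballsub y yb)) nE.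
  by exists b => //; split => //; exists y.
have [_ _ Mfin] := HC (z k a) (cp * delta ^+ k) zO (mulr_gt0 cp0 dk0) (ltW d2).
set M := fine (mu (rball rho (z k a) (cp * delta ^+ k))).
have M0 : 0 <= M by apply: fine_ge0; exact: measure_ge0.
have muF : (mu F <= M%:E)%E.
  rewrite /M fineK; last by rewrite ge0_fin_numE ?measure_ge0.
  by apply: le_measure; [exact/mem_set|apply/mem_set; exact: ball_meas|exact: Fsub].
have [|m [m0 Hm]] := @finite_min R (I k) S' (fun b => mu (Q k b)) fS'.
  move=> b _ /=.
  have r0 : 0 < a0 * delta ^+ k / 2 by rewrite divr_gt0.
  have [h _ _] := HC (z k b) (a0 * delta ^+ k / 2) (zOm b) r0 ltac:(lra).
  have e2 : 2 * (a0 * delta ^+ k / 2) = a0 * delta ^+ k by field.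
  rewrite e2 in h; apply: lt_le_trans h _.
  apply: le_measure; [apply/mem_set; exact: ball_meas|apply/mem_set; apply: open_meas; exact: Qopen|].
  exact: Qa.
exists (C / c0 + M / (c0 * m)).
rewrite /prop_near1 /almost_everywhere /=.
apply: negE => x /= nPx; apply: contrapT => nE; apply: nPx => -[b Sb Qbx] r r0.
have xO : Om n.+3 x := Om_incr n.+2 isT x (inQ b x Qbx).
have mB := ball_meas x r; have mB2 := ball_meas x (2 * r).
have mQ : measurable (Q k b) by apply: open_meas; exact: Qopen.
have BQF : (mu (rball rho x r `&` Q k b) <= mu (rball rho x r `&` F))%E.
  apply: le_measure; [apply/mem_set; exact: measurableI|apply/mem_set; exact: measurableI|].
  by move=> y [h1 h2]; split => //; exists b.
have B2F : (mu (rball rho x (2 * r) `&` F) <= mu F)%E.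
  apply: le_measure; [apply/mem_set; exact: measurableI|apply/mem_set; exact: Fmeas|].
  exact: subIsetr.
have B2F' : (mu (rball rho x (2 * r) `&` F) <= mu (rball rho x (2 * r)))%E.
  apply: le_measure; [apply/mem_set; exact: measurableI|apply/mem_set; exact: mB2|].
  exact: subIsetl.
have Cc0 : 0 <= C / c0 by rewrite divr_ge0 //; lra.
have Mc0 : 0 <= M / (c0 * m) by rewrite divr_ge0 // mulr_ge0 // ltW.
have hBF0 : (0 <= mu (rball rho x r `&` F))%E by apply: measure_ge0.
case: (leP r (delta ^+ k)) => hr.
- have [_ h2 _] := HC x r xO r0 (le_trans hr (ltW d1)).
  have hs := Qhs k b x r k0 Qbx nE r0 hr.
  apply: le_trans B2F' _; apply: le_trans h2 _.
  have -> : (C%:E * mu (rball rho x r) = (C / c0)%:E * (c0%:E * mu (rball rho x r)))%E.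
    by rewrite muleA -EFinM divfK // gt_eqF.
  apply: lee_pmul => //.
  + by rewrite mule_ge0 // ?lee_fin ?ltW // measure_ge0.
  + by rewrite lee_fin lerDl.
  + exact: le_trans hs BQF.
- have hl := Qhl k b x r k0 Qbx nE hr.
  apply: le_trans B2F _; apply: le_trans muF _.
  have -> : (M%:E = (M / (c0 * m))%:E * (c0%:E * m%:E))%E.
    by rewrite -!EFinM divfK // gt_eqF // mulr_gt0.
  apply: lee_pmul => //.
  + by rewrite -EFinM lee_fin mulr_ge0 // ltW.
  + by rewrite lee_fin lerDr.
  + apply: le_trans BQF; apply: le_trans hl.
    by apply: lee_pmul; rewrite ?lee_fin ?(ltW c00) ?(ltW m0) //; exact: Hm.
Qed.
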